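(* Let $\mathsf{G}$ be a global type. If $\mathsf{G}$ is bounded, then its event structure $\mathcal{S}(\mathsf{G})$ is semantically bounded.
   Context: Participants are ranged over by $\mathsf{p},\mathsf{q},\mathsf{r},\mathsf{s}$ and message labels by $\lambda$. Global types are defined coinductively (and assumed regular, i.e. with finitely many distinct subtrees): $\mathsf{G} ::= \mathsf{p}\to\mathsf{q}:\{\lambda_i;\mathsf{G}_i\}_{i\in I} \mid \mathsf{End}$, with $I$ finite non-empty and the $\lambda_i$ pairwise distinct. A communication is $\alpha=\mathsf{p}\mathsf{q}\lambda$ with $\mathrm{part}(\mathsf{p}\mathsf{q}\lambda)=\{\mathsf{p},\mathsf{q}\}$; a trace is a finite sequence of communications, $\mathrm{part}$ extended to traces by union, $|\sigma|$ its length. $\mathrm{Tr}(\mathsf{End})=\emptyset$, $\mathrm{Tr}(\mathsf{p}\to\mathsf{q}:\{\lambda_i;\mathsf{G}_i\}_{i\in I})=\{\mathsf{p}\mathsf{q}\lambda_i\cdot\sigma\mid i\in I,\ \sigma=\epsilon\text{ or }\sigma\in\mathrm{Tr}(\mathsf{G}_i)\}$. Depth: $\mathrm{depth}(\mathsf{p},\sigma)=|\sigma_1\cdot\alpha|$ if $\sigma=\sigma_1\cdot\alpha\cdot\sigma_2$ with $\mathsf{p}\notin\mathrm{part}(\sigma_1)$ and $\mathsf{p}\in\mathrm{part}(\alpha)$, and $0$ otherwise; $\mathrm{depth}(\mathsf{p},\mathsf{G})=\sup\{\mathrm{depth}(\mathsf{p},\sigma)\mid\sigma\in\mathrm{Tr}(\mathsf{G})\}$.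 $\mathsf{G}$ is bounded if $\mathrm{depth}(\mathsf{p},\mathsf{G}')$ is finite for every participant $\mathsf{p}$ and every subtree $\mathsf{G}'$ of $\mathsf{G}$. Event structure of $\mathsf{G}$: permutation equivalence $\sim$ is the least equivalence on traces with $\sigma\cdot\alpha\cdot\alpha'\cdot\sigma'\sim\sigma\cdot\alpha'\cdot\alpha\cdot\sigma'$ whenever $\mathrm{part}(\alpha)\cap\mathrm{part}(\alpha')=\emptyset$; $[\sigma]$ is the class of $\sigma$. A non-empty trace $\sigma=\sigma[1]\cdots\sigma[n]$ is pointed if for every $1\le i<n$ there is $j$ with $i<j\le n$ and $\mathrm{part}(\sigma[i])\cap\mathrm{part}(\sigma[j])\ne\emptyset$. A g-event is $[\sigma]$ with $\sigma$ pointed. Causal prefixing: $\alpha\circ[\sigma]=[\alpha\cdot\sigma]$ if $\mathrm{part}(\alpha)\cap\mathrm{part}(\sigma)\ne\emptyset$, $=[\sigma]$ otherwise; $\epsilon\circ\gamma=\gamma$, $(\alpha\cdot\sigma)\circ\gamma=\alpha\circ(\sigma\circ\gamma)$. $\mathrm{ev}(\sigma\cdot\alpha)=\sigma\circ[\alpha]$. Causality: $\gamma\le\gamma'$ if $\gamma=[\sigma]$ and $\gamma'=[\sigma\cdot\sigma']$ for some $\sigma,\sigma'$. Conflict: $\gamma\#\gamma'$ if $\gamma=[\sigma\cdot\mathsf{p}\mathsf{q}\lambda_1\cdot\sigma_1]$, $\gamma'=[\sigma\cdot\mathsf{p}\mathsf{q}\lambda_2\cdot\sigma_2]$ with $\lambda_1\ne\lambda_2$.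 $\mathcal{S}(\mathsf{G})=(\mathcal{E}(\mathsf{G}),\le_{\mathsf{G}},\#_{\mathsf{G}})$ with $\mathcal{E}(\mathsf{G})=\{\mathrm{ev}(\sigma)\mid\sigma\in\mathrm{Tr}(\mathsf{G})\}$ and the relations restricted to $\mathcal{E}(\mathsf{G})$. Semantic boundedness: for an event structure $S=(E,\le,\#)$ of this kind, a participant $\mathsf{p}$ is in $\mathrm{part}(S)$ if $\mathsf{p}\in\mathrm{part}(\sigma)$ for some $[\sigma]\in E$. For $k\in\mathbb{N}$, $\mathrm{depth}^k(\mathsf{p},[\sigma])=|\sigma|$ if $\sigma=\sigma_1\cdot\alpha_1\cdots\sigma_k\cdot\alpha_k$ with $\mathsf{p}\in\mathrm{part}(\alpha_i)$ and $\mathsf{p}\notin\mathrm{part}(\sigma_i)$ for $i=1,\dots,k$, and $0$ otherwise; $\mathrm{depth}^k(\mathsf{p},S)=\sup\{\mathrm{depth}^k(\mathsf{p},\gamma)\mid\gamma\in E\}$. $S$ is semantically bounded if $\mathrm{depth}^k(\mathsf{p},S)$ is finite for every $\mathsf{p}\in\mathrm{part}(S)$ and every $k\in\mathbb{N}$. *)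

(* Defs.v *)
From Stdlib Require Import List Arith Relations.
Import ListNotations.

Definition participant := nat.
Definition label := nat.

(* Global types, coinductively: p -> q : {lambda_i ; G_i}_{i in I} | End.
   The branches are a (finite) list of (label, continuation) pairs. *)
CoInductive gtype : Type :=
| GEnd : gtype
| GComm : participant -> participant -> list (label * gtype) -> gtype.

Inductive child : gtype -> gtype -> Prop :=
| child_intro p q bs l G : In (l, G) bs -> child G (GComm p q bs).

Definition subtree : gtype -> gtype -> Prop := clos_refl_trans gtype child.

Definition local_wf (G : gtype) : Prop :=
  match G with
  | GEnd => True
  | GComm _ _ bs => bs <> [] /\ NoDup (map fst bs)
  end.

Definition wf (G : gtype) : Prop := forall G', subtree G' G -> local_wf G'.

CoInductive bisim : gtype -> gtype -> Prop :=
| bisim_end : bisim GEnd GEnd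
| bisim_comm p q bs bs' :
    Forall2 (fun x y => fst x = fst y /\ bisim (snd x) (snd y)) bs bs' ->
    bisim (GComm p q bs) (GComm p q bs').

Definition regular (G : gtype) : Prop :=
  exists l : list gtype, forall G', subtree G' G -> exists G'', In G'' l /\ bisim G' G''.

Definition comm := (participant * participant * label)%type.
Definition trace := list comm.

Definition part_c (a : comm) : list participant :=
  let '(p, q, _) := a in [p; q].
Definition part_t (s : trace) : list participant := flat_map part_c s.

Inductive InTr : gtype -> trace -> Prop :=
| tr_one p q bs l G : In (l, G) bs -> InTr (GComm p q bs) [(p, q, l)]
| tr_cons p q bs l G s : In (l, G) bs -> InTr G s -> InTr (GComm p q bs) ((p, q, l) :: s).

Definition inpartb (p : participant) (a : comm) : bool :=
  existsb (Nat.eqb p) (part_c a).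

Fixpoint depth (p : participant) (s : trace) : nat :=
  match s with
  | [] => 0
  | a :: s' => if inpartb p a then 1 else
                 match depth p s' with 0 => 0 | d => S d end
  end.

Definition bounded (G : gtype) : Prop :=
  forall (p : participant) (G' : gtype), subtree G' G ->
    exists n, forall s, InTr G' s -> depth p s <= n.

Definition disjoint_c (a b : comm) : Prop :=
  forall r, In r (part_c a) -> ~ In r (part_c b).

Inductive swap_step : trace -> trace -> Prop :=
| swap_intro s a b s' : disjoint_c a b -> swap_step (s ++ a :: b :: s') (s ++ b :: a :: s').

Definition perm_equiv : trace -> trace -> Prop := clos_refl_sym_trans trace swap_step.

(* Equivalence classes [sigma], represented as predicates on traces. *)
Definition event := trace -> Prop.
Definition cls (s : trace) : event := fun t => perm_equiv s t.

(* Causal prefixing, computed on representatives: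
   alpha o [sigma] = [alpha . sigma] if part(alpha) meets part(sigma), [sigma] otherwise;
   (alpha . sigma) o gamma = alpha o (sigma o gamma). *)
Definition meetsb (a : comm) (s : trace) : bool :=
  existsb (fun r => existsb (Nat.eqb r) (part_t s)) (part_c a).

Definition cprefix1 (a : comm) (s : trace) : trace :=
  if meetsb a s then a :: s else s.

Definition cprefix (s : trace) (t : trace) : trace := fold_right cprefix1 t s.

(* ev(sigma . alpha) = sigma o [alpha] *)
Definition ev (s : trace) : event :=
  match rev s with
  | [] => cls []            (* never used: traces of G are non-empty *)
  | a :: r => cls (cprefix (rev r) [a])
  end.

Record evstruct := { ES_E : event -> Prop; ES_le : event -> event -> Prop;
                     ES_conf : event -> event -> Prop }.

Definition causality (g g' : event) : Prop :=
  exists s s', g = cls s /\ g' = cls (s ++ s').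

Definition conflict (g g' : event) : Prop :=
  exists s p q l1 l2 s1 s2, l1 <> l2 /\
    g = cls (s ++ (p, q, l1) :: s1) /\ g' = cls (s ++ (p, q, l2) :: s2).

Definition events_of (G : gtype) (g : event) : Prop := exists s, InTr G s /\ g = ev s.

Definition S_of (G : gtype) : evstruct :=
  {| ES_E := events_of G;
     ES_le := fun g g' => events_of G g /\ events_of G g' /\ causality g g';
     ES_conf := fun g g' => events_of G g /\ events_of G g' /\ conflict g g' |}.

Definition part_S (S : evstruct) (p : participant) : Prop :=
  exists g s, ES_E S g /\ g s /\ In p (part_t s).

Inductive kdecomp (p : participant) : nat -> trace -> Prop :=
| kd0 : kdecomp p 0 []
| kdS k s1 a s2 : ~ In p (part_t s1) -> In p (part_c a) -> kdecomp p k s2 ->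
    kdecomp p (S k) (s1 ++ a :: s2).

(* depth^k(p, gamma) <= n, for gamma an equivalence class. *)
Definition depthk_le (k : nat) (p : participant) (g : event) (n : nat) : Prop :=
  forall s, g s -> kdecomp p k s -> length s <= n.

Definition sem_bounded (S : evstruct) : Prop :=
  forall p, part_S S p -> forall k : nat,
    exists n, forall g, ES_E S g -> depthk_le k p g n.

(* Main.v *)
Require Import Defs.
From Stdlib Require Import List Arith Relations Lia Classical.
Import ListNotations.

Definition cnt (p : participant) (s : trace) : nat := length (filter (inpartb p) s).

Lemma inpartb_iff p a : inpartb p a = true <-> In p (part_c a).
Proof.
  unfold inpartb. rewrite existsb_exists. split.
  - intros [r [Hr He]]. apply Nat.eqb_eq in He. subst. auto.
  - intros H. exists p. split; auto. apply Nat.eqb_refl.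
Qed.

Lemma part_t_cons c s : part_t (c :: s) = part_c c ++ part_t s.
Proof. reflexivity. Qed.

Lemma part_t_app s t : part_t (s ++ t) = part_t s ++ part_t t.
Proof. unfold part_t. apply flat_map_app. Qed.

Lemma cnt_cons p c s : cnt p (c :: s) = (if inpartb p c then 1 else 0) + cnt p s.
Proof. unfold cnt. simpl. destruct (inpartb p c); reflexivity. Qed.

Lemma cnt_app p s t : cnt p (s ++ t) = cnt p s + cnt p t.
Proof. unfold cnt. rewrite filter_app, length_app. reflexivity. Qed.

Lemma cnt_nopart p s : ~ In p (part_t s) -> cnt p s = 0.
Proof.
  induction s as [|c s IH]; intros H; [reflexivity|].
  rewrite cnt_cons. rewrite part_t_cons in H.
  destruct (inpartb p c) eqn:E.
  - apply inpartb_iff in E. exfalso. apply H. apply in_or_app. auto.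
  - simpl. apply IH. intro; apply H; apply in_or_app; auto.
Qed.

Definition meets (x : comm) (t : trace) : Prop :=
  exists r, In r (part_c x) /\ In r (part_t t).

Inductive pointed : trace -> Prop :=
| pt1 a : pointed [a]
| ptS x t : pointed t -> meets x t -> pointed (x :: t).

Definition ends_with (a : comm) (s : trace) : Prop := exists t, s = t ++ [a].

Lemma meetsb_iff a s : meetsb a s = true <-> meets a s.
Proof.
  unfold meetsb, meets. rewrite existsb_exists. split.
  - intros [r [Hr He]]. apply existsb_exists in He. destruct He as [r' [Hr' He]].
    apply Nat.eqb_eq in He. subst. eauto.
  - intros [r [H1 H2]]. exists r. split; auto. apply existsb_exists.
    exists r. split; auto. apply Nat.eqb_refl.
Qed.

Lemma part_t_swap r s x y s' :
  In r (part_t (s ++ x :: y :: s')) -> In r (part_t (s ++ y :: x :: s')).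
Proof.
  rewrite !part_t_app, !part_t_cons. rewrite !in_app_iff. tauto.
Qed.

Lemma pointed_swap s x y s' : disjoint_c x y ->
  pointed (s ++ x :: y :: s') -> pointed (s ++ y :: x :: s').
Proof.
  intros Hd. induction s as [|z s IH]; simpl; intros H.
  - inversion H; subst. destruct H3 as [r [Hr1 Hr2]].
    rewrite part_t_cons, in_app_iff in Hr2. destruct Hr2 as [Hr2|Hr2].
    { exfalso. exact (Hd r Hr1 Hr2). }
    inversion H2; subst.
    + simpl in Hr2. contradiction.
    + constructor. constructor; auto. exists r; auto.
      destruct H4 as [r' [H5 H6]]. exists r'. split; auto.
      rewrite part_t_cons, in_app_iff. auto.
  - inversion H; subst.
    + destruct s; discriminate.
    + constructor; auto. destruct H3 as [r [Hr1 Hr2]]. exists r. split; auto.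
      apply part_t_swap. auto.
Qed.

Lemma pointed_suffix s t : t <> [] -> pointed (s ++ t) -> pointed t.
Proof.
  intros Ht. induction s as [|z s IH]; simpl; intros H; auto.
  inversion H; subst.
  - destruct s; destruct t; try discriminate; congruence.
  - auto.
Qed.

Lemma swap_inv a t1 t2 : swap_step t1 t2 ->
  pointed t1 /\ ends_with a t1 -> pointed t2 /\ ends_with a t2.
Proof.
  intros [s x y s' Hd] [Hp [t Ht]]. split.
  - apply pointed_swap; auto.
  - destruct s' as [|b s''] using rev_ind.
    + exfalso. apply pointed_suffix in Hp; [|discriminate].
      inversion Hp as [|? ? _ Hm]; subst.
      destruct Hm as [r [H1' H2']]. simpl in H2'. rewrite app_nil_r in H2'.
      exact (Hd r H1' H2').
    + idtac.
      replace (s ++ x :: y :: s'' ++ [b]) with ((s ++ x :: y :: s'') ++ [b]) in Ht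
        by (rewrite <- app_assoc; reflexivity).
      apply app_inj_tail in Ht. destruct Ht as [_ Hb]. subst.
      exists (s ++ y :: x :: s''). rewrite <- app_assoc. reflexivity.
Qed.

Lemma swap_sym t1 t2 : swap_step t1 t2 -> swap_step t2 t1.
Proof.
  intros [s x y s' Hd]. constructor. intros r H1 H2. exact (Hd r H2 H1).
Qed.

Lemma perm_inv a t1 t2 : perm_equiv t1 t2 ->
  (pointed t1 /\ ends_with a t1 <-> pointed t2 /\ ends_with a t2).
Proof.
  intros H. induction H.
  - split; intros; eapply swap_inv; eauto. apply swap_sym; auto.
  - tauto.
  - tauto.
  - tauto.
Qed.

Lemma perm_len t1 t2 : perm_equiv t1 t2 -> length t1 = length t2 /\ forall p, cnt p t1 = cnt p t2.
Proof.
  intros H. induction H.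
  - destruct H. rewrite !length_app. split; [reflexivity|].
    intros p. rewrite !cnt_app, !cnt_cons. lia.
  - auto.
  - destruct IHclos_refl_sym_trans. split; auto.
  - destruct IHclos_refl_sym_trans1 as [A1 B1], IHclos_refl_sym_trans2 as [A2 B2]. split.
    + congruence.
    + intros p; rewrite B1; auto.
Qed.

Lemma cprefix_pointed a u : pointed (cprefix u [a]) /\ ends_with a (cprefix u [a]).
Proof.
  induction u as [|b u IH]; simpl.
  - split; [constructor | exists []; reflexivity].
  - destruct IH as [Hp [t Ht]]. unfold cprefix1.
    destruct (meetsb b (cprefix u [a])) eqn:E.
    + split. constructor; auto. apply meetsb_iff; auto.
      exists (b :: t). rewrite Ht. reflexivity.
    + split; auto. exists t; auto.
Qed.

Lemma cprefix_cnt p u t : In p (part_t t) ->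
  cnt p (cprefix u t) = cnt p u + cnt p t /\ In p (part_t (cprefix u t)) /\
  length (cprefix u t) <= length u + length t.
Proof.
  intros Ht. induction u as [|b u IH]; simpl.
  - auto.
  - destruct IH as [H1 [H2 H3]]. unfold cprefix1.
    destruct (inpartb p b) eqn:E.
    + assert (meetsb b (cprefix u t) = true) as M.
      { apply meetsb_iff. exists p. split; auto. apply inpartb_iff; auto. }
      rewrite M. rewrite !cnt_cons, E. split; [lia|]. split.
      * rewrite part_t_cons. apply in_or_app; auto.
      * simpl. lia.
    + rewrite cnt_cons, E.
      destruct (meetsb b (cprefix u t)).
      * rewrite cnt_cons, E. split; [lia|]. split.
        -- rewrite part_t_cons. apply in_or_app; auto.
        -- simpl. lia.
      * split; [lia|]. split; auto; lia.
Qed.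

Lemma kdecomp_props p k s : kdecomp p k s ->
  cnt p s = k /\ (s = [] \/ exists t b, s = t ++ [b] /\ In p (part_c b)).
Proof.
  intros H. induction H.
  - auto.
  - destruct IHkdecomp as [Hc Hl]. split.
    + rewrite cnt_app, cnt_cons, cnt_nopart by auto.
      replace (inpartb p a) with true by (symmetry; apply inpartb_iff; auto). lia.
    + right. destruct Hl as [->|[t [b [-> Hb]]]].
      * exists s1, a. auto.
      * exists (s1 ++ a :: t), b. split; auto. rewrite <- app_assoc. reflexivity.
Qed.

Lemma Forall2_in_l {A B} (R : A -> B -> Prop) xs ys x :
  Forall2 R xs ys -> In x xs -> exists y, In y ys /\ R x y.
Proof.
  intros H. induction H; simpl; intros Hi; [contradiction|].
  destruct Hi as [<-|Hi]; eauto. destruct (IHForall2 Hi) as [z0 [? ?]]; eauto.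
Qed.

Lemma Forall2_in_r {A B} (R : A -> B -> Prop) xs ys y :
  Forall2 R xs ys -> In y ys -> exists x, In x xs /\ R x y.
Proof.
  intros H. induction H; simpl; intros Hi; [contradiction|].
  destruct Hi as [<-|Hi]; eauto. destruct (IHForall2 Hi) as [z0 [? ?]]; eauto.
Qed.

Lemma InTr_bisim_l G1 G2 s : bisim G1 G2 -> InTr G1 s -> InTr G2 s.
Proof.
  intros Hb H. revert G2 Hb. induction H; intros G2 Hb; inversion Hb; subst.
  - destruct (Forall2_in_l _ _ _ _ ltac:(eassumption) H) as [[l' G'] [Hi [Hf _]]].
    simpl in Hf; subst. eapply tr_one; eauto.
  - destruct (Forall2_in_l _ _ _ _ ltac:(eassumption) H) as [[l' G'] [Hi [Hf Hs]]].
    simpl in Hf, Hs; subst. eapply tr_cons; eauto.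
Qed.

Lemma InTr_bisim_r G1 G2 s : bisim G1 G2 -> InTr G2 s -> InTr G1 s.
Proof.
  intros Hb H. revert G1 Hb. induction H; intros G1 Hb; inversion Hb; subst.
  - destruct (Forall2_in_r _ _ _ _ ltac:(eassumption) H) as [[l' G'] [Hi [Hf _]]].
    simpl in Hf; subst. eapply tr_one; eauto.
  - destruct (Forall2_in_r _ _ _ _ ltac:(eassumption) H) as [[l' G'] [Hi [Hf Hs]]].
    simpl in Hf, Hs; subst. eapply tr_cons; eauto.
Qed.

Lemma InTr_split G u v : u <> [] -> v <> [] -> InTr G (u ++ v) ->
  exists G'', subtree G'' G /\ InTr G'' v.
Proof.
  revert G. induction u as [|c u IH]; intros G Hu Hv H; [congruence|].
  simpl in H. inversion H as [|? ? ? ? ? ? Hin Htr]; subst.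
  - destruct u; destruct v; simpl in *; congruence.
  - destruct u as [|c' u'].
    + simpl in Htr. exists G0. split; auto. apply rt_step. econstructor; eauto.
    + destruct (IH G0 ltac:(discriminate) Hv Htr) as [G'' [Hs Ht]].
      exists G''. split; auto. eapply rt_trans; eauto. apply rt_step. econstructor; eauto.
Qed.

Lemma depth_decomp p s : In p (part_t s) ->
  exists s1 a s2, s = s1 ++ a :: s2 /\ ~ In p (part_t s1) /\ In p (part_c a) /\
    depth p s = S (length s1).
Proof.
  induction s as [|c s IH]; simpl; intros H; [contradiction|].
  destruct (inpartb p c) eqn:E.
  - exists [], c, s. apply inpartb_iff in E. simpl. auto.
  - assert (~ In p (part_c c)) as Hn by (rewrite <- inpartb_iff; congruence).
    apply in_app_iff in H. destruct H as [H|H]; [contradiction|].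
    destruct (IH H) as [s1 [a [s2 [-> [H1 [H2 H3]]]]]].
    exists (c :: s1), a, s2. rewrite H3. simpl. repeat split; auto.
    rewrite in_app_iff. tauto.
Qed.

Lemma uniform_D G p : regular G -> bounded G ->
  exists D, forall G', subtree G' G -> forall s, InTr G' s -> depth p s <= D.
Proof.
  intros [l Hl] Hbd.
  assert (exists D, forall G'', In G'' l -> forall G', subtree G' G -> bisim G' G'' ->
            forall s, InTr G' s -> depth p s <= D) as [D HD].
  { clear Hl. induction l as [|G0 l IH].
    - exists 0. intros G'' [].
    - destruct IH as [D1 HD1].
      destruct (classic (exists G1, subtree G1 G /\ bisim G1 G0)) as [[G1 [Hs1 Hb1]]|Hn].
      + destruct (Hbd p G1 Hs1) as [n Hn].
        exists (Nat.max n D1). intros G'' [<-|Hi] G' Hs Hb s Ht.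
        * specialize (Hn s (InTr_bisim_r _ _ _ Hb1 (InTr_bisim_l _ _ _ Hb Ht))). lia.
        * specialize (HD1 G'' Hi G' Hs Hb s Ht). lia.
      + exists D1. intros G'' [<-|Hi] G' Hs Hb s Ht.
        * exfalso. apply Hn. eauto.
        * eauto. }
  exists D. intros G' Hs s Ht. destruct (Hl G' Hs) as [G'' [Hi Hb]]. eauto.
Qed.

Lemma bound_len p D G :
  (forall G', subtree G' G -> forall s, InTr G' s -> depth p s <= D) ->
  forall n s G', cnt p s = n -> subtree G' G -> InTr G' s ->
  (exists t a, s = t ++ [a] /\ In p (part_c a)) -> length s <= n * D.
Proof.
  intros HD n. induction n as [|n IH]; intros s G' Hc Hs Ht [t [a [Hta Ha]]].
  - exfalso. subst. rewrite cnt_app, cnt_cons in Hc.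
    replace (inpartb p a) with true in Hc by (symmetry; apply inpartb_iff; auto). lia.
  - assert (In p (part_t s)) as Hin.
    { subst. rewrite part_t_app, part_t_cons. apply in_app_iff. right. apply in_app_iff; auto. }
    destruct (depth_decomp p s Hin) as [s1 [a1 [s2 [Hs12 [H1 [H2 H3]]]]]].
    pose proof (HD G' Hs s Ht) as Hds. rewrite H3 in Hds.
    assert (cnt p s2 = n) as Hc2.
    { rewrite Hs12, cnt_app, cnt_cons, cnt_nopart in Hc by auto.
      replace (inpartb p a1) with true in Hc by (symmetry; apply inpartb_iff; auto). lia. }
    destruct s2 as [|c s2'] eqn:Es2.
    + rewrite Hs12, length_app. simpl. lia.
    + destruct (InTr_split G' (s1 ++ [a1]) (c :: s2')) as [G'' [Hs'' Ht'']].
      * destruct s1; discriminate.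
      * discriminate.
      * rewrite <- app_assoc. simpl. rewrite <- Hs12. auto.
      * assert (length (c :: s2') <= n * D).
        { apply (IH _ G''); auto. eapply rt_trans; eauto.
          destruct (exists_last (l := c :: s2') ltac:(discriminate)) as [t' [a' Ht']].
          exists t', a'. split; auto.
          rewrite Ht' in Hs12. rewrite Hta in Hs12.
          replace (s1 ++ a1 :: t' ++ [a']) with ((s1 ++ a1 :: t') ++ [a']) in Hs12
            by (rewrite <- app_assoc; reflexivity).
          apply app_inj_tail in Hs12. destruct Hs12 as [_ <-]. auto. }
        rewrite Hs12, length_app. simpl in *. lia.
Qed.

Theorem mainTheorem4 (G : gtype) :
  wf G -> regular G -> bounded G -> sem_bounded (S_of G).
Proof.
  intros _ Hreg Hbd p _ k.
  destruct (uniform_D G p Hreg Hbd) as [D HD].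
  exists (k * D). intros g [sg [Htr ->]] s Hs Hk.
  destruct (kdecomp_props p k s Hk) as [Hck [->|[t [b [Htb Hb]]]]].
  { simpl. lia. }
  unfold ev in Hs. destruct (rev sg) as [|a r] eqn:Er.
  { apply perm_len in Hs. destruct Hs as [Hl _]. rewrite <- Hl. simpl. lia. }
  unfold cls in Hs.
  pose proof (perm_len _ _ Hs) as [Hl Hc].
  pose proof (proj1 (perm_inv a _ _ Hs) (cprefix_pointed a (rev r))) as [_ [t' Ht']].
  rewrite Htb in Ht'. apply app_inj_tail in Ht'. destruct Ht' as [_ <-].
  assert (sg = rev r ++ [b]) as Hsg.
  { rewrite <- (rev_involutive sg), Er. reflexivity. }
  assert (In p (part_t [b])) as Hpb by (simpl; rewrite app_nil_r; auto).
  destruct (cprefix_cnt p (rev r) [b] Hpb) as [C1 [_ C3]].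
  assert (cnt p sg = k) as Hcs.
  { rewrite Hsg, cnt_app. rewrite <- C1, Hc, <- Hck. reflexivity. }
  assert (length sg <= k * D).
  { apply (bound_len p D G HD k sg G); auto. apply rt_refl. exists (rev r), b. auto. }
  rewrite <- Hl. rewrite Hsg, length_app in H. simpl in *. lia.
Qed.
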